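(* Let $X\in\mathbb{R}^{n\times p}$ have unit $\ell_2$-norm columns, let $\beta\in\mathbb{R}^p$ be $k$-sparse with support $\mathcal{S}$, let $\eta\in\mathbb{R}^n$, $\sigma> 0$, $y=X\beta+\eta$ and $w=X^\top y$. Suppose $X$ satisfies the $(k,b)$-screening condition for $\beta$ with parameter $b=b(n,p)$, and suppose the event $\|X^\top\eta\|_\infty\le 2\sqrt{\sigma^2\log p}$ holds. Let $T\subset[[p]]$ be any set with $\mathcal{S}\subset T$ and $|T|=q$, and define $$t:=\Big|\Big\{j\in T: |w_j|\ge \min_{l\in\mathcal{S}}|w_l|\Big\}\Big|.$$ Assume $\beta_{\min}-b\|\beta\|_2-2\sqrt{\sigma^2\log p}>0$. Then $$t\le \frac{q\,b\,\|\beta\|_2+\|\beta\|_1+2q\sqrt{\sigma^2\log p}}{\beta_{\min}-b\,\|\beta\|_2-2\sqrt{\sigma^2\log p}}.$$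
   Context: Notation: $[[p]]=\{1,\dots,p\}$; $p\ge 2$, $k<n$. $X$ has columns $X_1,\dots,X_p$ with $\|X_j\|_2=1$. $\beta$ is $k$-sparse with support $\mathcal{S}=\{i:\beta_i\neq0\}$, $|\mathcal{S}|=k$, $\mathcal{S}^c=[[p]]\setminus\mathcal{S}$, $\beta_{\min}=\min_{i\in\mathcal{S}}|\beta_i|$. $(k,b)$-screening condition: $X$ satisfies it for $\beta$ if there is $b=b(n,p)$ with $0<b<1/\sqrt{k}$ such that (SC-1) $\max_{i\in\mathcal{S}}\big|\sum_{j\in\mathcal{S},\,j\neq i}X_i^\top X_j\beta_j\big|\le b\|\beta\|_2$ and (SC-2) $\max_{i\in\mathcal{S}^c}\big|\sum_{j\in\mathcal{S}}X_i^\top X_j\beta_j\big|\le b\|\beta\|_2$. *)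

(* Defs.v *)
From Stdlib Require Import Reals Lra Lia List.
Import ListNotations.
Open Scope R_scope.

(* Indices are 0-based: [[p]] is rendered as {0, ..., p-1}.
   A matrix X in R^{n x p} is a function X : nat -> nat -> R, X r j = entry
   (row r < n, column j < p); vectors are functions nat -> R on {0..dim-1}. *)

Definition sumL (l : list nat) (f : nat -> R) : R :=
  fold_right (fun j acc => f j + acc) 0 l.

Definition sumR (m : nat) (f : nat -> R) : R := sumL (seq 0 m) f.

(* minimum of f over a list (the list is assumed nonempty; 0 on nil) *)
Definition minL (f : nat -> R) (l : list nat) : R :=
  match l with
  | [] => 0
  | x :: r => fold_left (fun m y => Rmin m (f y)) r (f x)
  end.

Definition colip (n : nat) (X : nat -> nat -> R) (i j : nat) : R :=
  sumR n (fun r => X r i * X r j).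

Definition XtV (n : nat) (X : nat -> nat -> R) (v : nat -> R) (j : nat) : R :=
  sumR n (fun r => X r j * v r).

Definition XV (p : nat) (X : nat -> nat -> R) (v : nat -> R) (r : nat) : R :=
  sumR p (fun j => X r j * v j).

Definition norm2 (p : nat) (v : nat -> R) : R := sqrt (sumR p (fun j => v j ^ 2)).
Definition norm1 (p : nat) (v : nat -> R) : R := sumR p (fun j => Rabs (v j)).

Definition supp (p : nat) (beta : nat -> R) : list nat :=
  filter (fun j => if Req_EM_T (beta j) 0 then false else true) (seq 0 p).

Definition beta_min (p : nat) (beta : nat -> R) : R :=
  minL (fun i => Rabs (beta i)) (supp p beta).

Definition screening (n p k : nat) (X : nat -> nat -> R) (beta : nat -> R) (b : R) : Prop :=
  0 < b /\ b < 1 / sqrt (INR k) /\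
  (forall i, In i (supp p beta) ->
     Rabs (sumL (filter (fun j => negb (Nat.eqb j i)) (supp p beta))
                (fun j => colip n X i j * beta j)) <= b * norm2 p beta) /\
  (forall i, (i < p)%nat -> ~ In i (supp p beta) ->
     Rabs (sumL (supp p beta) (fun j => colip n X i j * beta j)) <= b * norm2 p beta).

(* Main.v *)
Require Import Defs.
From Stdlib Require Import Reals Lra Lia List.
Import ListNotations.
Open Scope R_scope.

Lemma sumL_ext l f g : (forall x, In x l -> f x = g x) -> sumL l f = sumL l g.
Proof. induction l; simpl; intros H; auto. rewrite H by auto. rewrite IHl; auto. Qed.

Lemma sumL_plus l f g : sumL l (fun x => f x + g x) = sumL l f + sumL l g.
Proof. induction l; simpl; [lra|]. rewrite IHl; ring. Qed.

Lemma sumL_scal l c f : sumL l (fun x => c * f x) = c * sumL l f.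
Proof. induction l; simpl; [ring|]. rewrite IHl; ring. Qed.

Lemma sumL_swap l m (F : nat -> nat -> R) :
  sumL l (fun r => sumL m (F r)) = sumL m (fun i => sumL l (fun r => F r i)).
Proof.
  induction l; simpl.
  - induction m; simpl; auto. rewrite <- IHm; ring.
  - rewrite IHl. rewrite <- sumL_plus. reflexivity.
Qed.

Lemma sumL_le l f g : (forall x, In x l -> f x <= g x) -> sumL l f <= sumL l g.
Proof. induction l; simpl; intros H; [lra|]. pose proof (H a (or_introl eq_refl)).
  assert (sumL l f <= sumL l g) by auto. lra. Qed.

Lemma sumL_nonneg l f : (forall x, In x l -> 0 <= f x) -> 0 <= sumL l f.
Proof. induction l; simpl; intros H; [lra|]. pose proof (H a (or_introl eq_refl)).
  assert (0 <= sumL l f) by auto. lra. Qed.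

Lemma sumL_filter_le (P : nat -> bool) l f : (forall x, In x l -> 0 <= f x) ->
  sumL (filter P l) f <= sumL l f.
Proof. induction l; simpl; intros H; [lra|]. pose proof (H a (or_introl eq_refl)).
  assert (sumL (filter P l) f <= sumL l f) by auto. destruct (P a); simpl; lra. Qed.

Lemma sumL_filter_eq (P : nat -> bool) l f : (forall x, In x l -> P x = false -> f x = 0) ->
  sumL (filter P l) f = sumL l f.
Proof. induction l; simpl; intros H; auto. destruct (P a) eqn:E; simpl.
  - rewrite IHl; auto.
  - rewrite H, IHl; auto; ring. Qed.

Lemma sumL_const_le l f D : (forall x, In x l -> D <= f x) -> INR (length l) * D <= sumL l f.
Proof. induction l; intros H; [simpl; lra|]. pose proof (H a (or_introl eq_refl)).
  assert (INR (length l) * D <= sumL l f) by (apply IHl; intros; apply H; right; auto).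
  simpl length; rewrite S_INR; simpl sumL. lra. Qed.

Lemma sumL_plus_const l f c : sumL l (fun x => f x + c) = sumL l f + INR (length l) * c.
Proof. induction l; [simpl; lra|]. simpl length; rewrite S_INR; simpl sumL. rewrite IHl; ring. Qed.

Lemma sumL_nodup_le T L f : NoDup T -> incl T L -> (forall x, 0 <= f x) ->
  sumL T f <= sumL L f.
Proof.
  revert L. induction T as [|a T IH]; intros L ND HI Hf; simpl.
  - apply sumL_nonneg; auto.
  - inversion ND; subst. assert (In a L) by (apply HI; left; auto).
    destruct (in_split a L H) as [L1 [L2 ->]].
    assert (E : sumL (L1 ++ a :: L2) f = f a + sumL (L1 ++ L2) f).
    { clear. induction L1; simpl; auto. rewrite IHL1; ring. }
    rewrite E. assert (sumL T f <= sumL (L1 ++ L2) f); [|lra].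
    apply IH; auto. intros x Hx. assert (In x (L1 ++ a :: L2)) by (apply HI; right; auto).
    apply in_app_or in H0. apply in_or_app. destruct H0 as [?|[?|?]]; auto.
    subst; contradiction.
Qed.

Lemma sumL_split l j h : NoDup l -> In j l ->
  sumL l h = h j + sumL (filter (fun x => negb (Nat.eqb x j)) l) h.
Proof.
  induction l as [|a l IH]; simpl; intros ND Hin; [contradiction|].
  inversion ND; subst. destruct (Nat.eqb a j) eqn:E; simpl.
  - apply Nat.eqb_eq in E; subst. f_equal. symmetry. apply sumL_filter_eq.
    intros x Hx Hf. destruct (Nat.eqb x j) eqn:E2; simpl in Hf; try discriminate.
    apply Nat.eqb_eq in E2; subst; contradiction.
  - apply Nat.eqb_neq in E. destruct Hin as [?|Hin]; [congruence|].
    rewrite (IH H2 Hin). ring.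
Qed.

Lemma fold_min_le (f : nat -> R) (r : list nat) acc : fold_left (fun m y => Rmin m (f y)) r acc <= acc /\
  forall y, In y r -> fold_left (fun m y => Rmin m (f y)) r acc <= f y.
Proof.
  revert acc; induction r as [|a r IHr]; simpl; intros acc.
  - split; [lra| tauto].
  - destruct (IHr (Rmin acc (f a))) as [H1 H2]. split.
    + pose proof (Rmin_l acc (f a)). lra.
    + intros y [<-|Hy].
      * pose proof (Rmin_r acc (f a)). lra.
      * auto.
Qed.

Lemma minL_le (f : nat -> R) l x : In x l -> minL f l <= f x.
Proof. destruct l as [|n l]; simpl; [contradiction|]. intros [<-|H]. apply (proj1 (fold_min_le f l (f n))). apply (proj2 (fold_min_le f l (f n))); auto. Qed.

Lemma fold_min_ge (f : nat -> R) (r : list nat) acc D : D <= acc -> (forall y, In y r -> D <= f y) ->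
  D <= fold_left (fun m y => Rmin m (f y)) r acc.
Proof. revert acc; induction r; simpl; intros acc H1 H2; auto.
  apply IHr; auto. apply Rmin_glb; auto. Qed.

Lemma minL_ge (f : nat -> R) l D : l <> [] -> (forall y, In y l -> D <= f y) -> D <= minL f l.
Proof. destruct l; simpl; [congruence|]. intros _ H. apply fold_min_ge; auto. Qed.

Lemma supp_In p beta j : In j (supp p beta) <-> (j < p)%nat /\ beta j <> 0.
Proof.
  unfold supp. rewrite filter_In, in_seq.
  destruct (Req_EM_T (beta j) 0); split; intros [H1 H2]; try discriminate; split; try lia; auto.
Qed.

Lemma supp_NoDup p beta : NoDup (supp p beta).
Proof. unfold supp. apply NoDup_filter, seq_NoDup. Qed.

Lemma w_eq n p X beta eta j :
  XtV n X (fun r => XV p X beta r + eta r) j =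
  sumL (supp p beta) (fun i => colip n X j i * beta i) + XtV n X eta j.
Proof.
  unfold XtV, XV, sumR.
  rewrite (sumL_ext _ _ (fun r => sumL (seq 0 p) (fun i => X r j * X r i * beta i) + X r j * eta r)).
  2:{ intros r _. rewrite Rmult_plus_distr_l, <- sumL_scal. f_equal. apply sumL_ext; intros; ring. }
  rewrite sumL_plus, sumL_swap. f_equal.
  unfold supp. rewrite sumL_filter_eq.
  - apply sumL_ext. intros i _. unfold colip, sumR. rewrite <- (Rmult_comm (beta i)), <- sumL_scal.
    apply sumL_ext; intros; ring.
  - intros x _ Hx. destruct (Req_EM_T (beta x) 0); try discriminate. rewrite e; ring.
Qed.

Lemma sqrt_eq1 x : sqrt x = 1 -> x = 1.
Proof.
  intros H. destruct (Rle_dec 0 x).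
  - rewrite <- (sqrt_sqrt x r), H; ring.
  - rewrite sqrt_neg_0 in H by lra. lra.
Qed.

Theorem lemma1 (n p k : nat) (X : nat -> nat -> R) (beta eta : nat -> R)
  (sigma b : R) (T : list nat) :
  (2 <= p)%nat -> (k < n)%nat ->
  (forall j, (j < p)%nat -> sqrt (sumR n (fun r => X r j ^ 2)) = 1) ->
  length (supp p beta) = k ->
  0 < sigma ->
  screening n p k X beta b ->
  (forall j, (j < p)%nat ->
     Rabs (XtV n X eta j) <= 2 * sqrt (sigma ^ 2 * ln (INR p))) ->
  NoDup T -> (forall j, In j T -> (j < p)%nat) ->
  (forall j, In j (supp p beta) -> In j T) ->
  let y := fun r => XV p X beta r + eta r in
  let w := fun j => XtV n X y j in
  let q := length T in
  let t := length (filter (fun j =>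
              if Rle_dec (minL (fun l => Rabs (w l)) (supp p beta)) (Rabs (w j))
              then true else false) T) in
  beta_min p beta - b * norm2 p beta - 2 * sqrt (sigma ^ 2 * ln (INR p)) > 0 ->
  INR t <= (INR q * b * norm2 p beta + norm1 p beta
            + 2 * INR q * sqrt (sigma ^ 2 * ln (INR p)))
           / (beta_min p beta - b * norm2 p beta - 2 * sqrt (sigma ^ 2 * ln (INR p))).
Proof.
  intros Hp Hn Hcol Hk Hsig [Hb0 [Hbk [SC1 SC2]]] Heta ND HT HS y w q t HD.
  set (s := sqrt (sigma ^ 2 * ln (INR p))) in *.
  set (nb := norm2 p beta) in *.
  set (D := beta_min p beta - b * nb - 2 * s) in *.
  assert (Hw : forall j, w j = sumL (supp p beta) (fun i => colip n X j i * beta i) + XtV n X eta j).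
  { intros j. unfold w, y. apply w_eq. }
  assert (Hup : forall j, In j T -> Rabs (w j) <= Rabs (beta j) + (b * nb + 2 * s)).
  { intros j HjT. pose proof (HT j HjT) as Hjp. pose proof (Heta j Hjp) as He.
    rewrite Hw. destruct (in_dec Nat.eq_dec j (supp p beta)) as [Hj|Hj].
    - rewrite (sumL_split _ j _ (supp_NoDup p beta) Hj).
      assert (colip n X j j = 1).
      { unfold colip. rewrite <- (sqrt_eq1 _ (Hcol j Hjp)). unfold sumR. apply sumL_ext; intros; ring. }
      rewrite H, Rmult_1_l. pose proof (SC1 j Hj). fold nb in H0.
      revert H0 He. generalize (sumL (filter (fun x => negb (x =? j)%nat) (supp p beta))
                   (fun i => colip n X j i * beta i)). generalize (XtV n X eta j). intros u v H0 He.
      unfold Rabs in *. repeat destruct Rcase_abs; lra.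
    - assert (beta j = 0). { destruct (Req_EM_T (beta j) 0); auto. exfalso; apply Hj, supp_In; auto. }
      rewrite H, Rabs_R0. pose proof (SC2 j Hjp Hj). fold nb in H0.
      revert H0 He. generalize (sumL (supp p beta) (fun i => colip n X j i * beta i)).
      generalize (XtV n X eta j). intros u v H0 He. unfold Rabs in *. repeat destruct Rcase_abs; lra. }
  assert (Hlow : forall j, In j (supp p beta) -> D <= Rabs (w j)).
  { intros j Hj. pose proof (proj1 (proj1 (supp_In p beta j) Hj)) as Hjp.
    pose proof (Heta j Hjp) as He. pose proof (minL_le (fun i => Rabs (beta i)) _ _ Hj) as Hm.
    fold (beta_min p beta) in Hm. unfold D.
    rewrite Hw, (sumL_split _ j _ (supp_NoDup p beta) Hj).
    assert (colip n X j j = 1).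
    { unfold colip. rewrite <- (sqrt_eq1 _ (Hcol j Hjp)). unfold sumR. apply sumL_ext; intros; ring. }
    rewrite H, Rmult_1_l. pose proof (SC1 j Hj). fold nb in H0. simpl in Hm.
    revert H0 He. generalize (sumL (filter (fun x => negb (x =? j)%nat) (supp p beta))
                 (fun i => colip n X j i * beta i)). generalize (XtV n X eta j). intros u v H0 He.
    unfold Rabs in *. repeat destruct Rcase_abs; lra. }
  assert (Hne : supp p beta <> []).
  { intros E. unfold D, beta_min in HD. rewrite E in HD. simpl in HD.
    assert (0 <= nb) by apply sqrt_pos. assert (0 <= s) by apply sqrt_pos.
    assert (0 <= b * nb) by (apply Rmult_le_pos; lra). lra. }
  assert (Hmin : D <= minL (fun l => Rabs (w l)) (supp p beta)) by (apply minL_ge; auto).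
  assert (H1 : INR t * D <= sumL T (fun j => Rabs (w j))).
  { eapply Rle_trans. apply sumL_const_le.
    2: apply sumL_filter_le; intros; apply Rabs_pos.
    intros x Hx. apply filter_In in Hx. destruct Hx as [_ Hx].
    destruct Rle_dec; [lra|discriminate]. }
  assert (H2 : sumL T (fun j => Rabs (w j)) <= norm1 p beta + INR q * (b * nb + 2 * s)).
  { eapply Rle_trans. apply sumL_le. exact Hup. rewrite sumL_plus_const.
    assert (sumL T (fun j => Rabs (beta j)) <= norm1 p beta); [|unfold q; lra].
    unfold norm1, sumR. apply sumL_nodup_le; auto. 2: intros; apply Rabs_pos.
    intros x Hx. apply in_seq. pose proof (HT x Hx). lia. }
  apply (Rmult_le_reg_r D); [lra|]. unfold Rdiv. rewrite Rmult_assoc, Rinv_l, Rmult_1_r by lra.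
  lra.
Qed.
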